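(* Let $\mathfrak{g}$ be a complex simple Lie algebra of rank $l$ with Cartan matrix $A=(a_{ij})_{i,j\in I}$, $I=\{1,\dots,l\}$, and let $D=\operatorname{diag}(d_1,\dots,d_l)$ with $d_i$ coprime positive integers such that $DA$ is symmetric. Let $\mathcal{P}$ be the group (under componentwise multiplication) of $l$-tuples $P=(P_1(u),\dots,P_l(u))$ of nonzero rational functions in $u$ over $\mathbb{C}$. For $j\in I$ and $P\in\mathcal{P}$ define $T_j(P)\in\mathcal{P}$ by \begin{align*} (T_j(P))_i&=P_i(u) &&\text{if } a_{ij}=0,\\ (T_j(P))_i&=P_i(u)\,P_j\!\left(u-\tfrac{d_i}{2}\right) &&\text{if } a_{ij}=-1,\\ (T_j(P))_i&=P_i(u)\,P_j(u-1)\,P_j(u) &&\text{if } a_{ij}=-2,\\ (T_j(P))_i&=P_i(u)\,P_j\!\left(u-\tfrac32\right)P_j\!\left(u-\tfrac12\right)P_j\!\left(u+\tfrac12\right) &&\text{if } a_{ij}=-3,\\ (T_j(P))_j&=\frac{1}{P_j(u-d_j)}. \end{align*} Then these formulas define an action of the braid group $\mathcal{B}$ of $\mathfrak{g}$ on $\mathcal{P}$, in which the generator $T_j$ acts by $P\mapsto T_j(P)$; for $w$ in the Weyl group with reduced expression $w=s_{r_1}\cdots s_{r_p}$ one sets $T_w(P)=T_{r_1}(T_{r_2}(\cdots T_{r_p}(P)))$.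
   Context: The braid group $\mathcal{B}$ of $\mathfrak{g}$ is the group generated by $T_i$, $i\in I$, with relations $T_iT_j=T_jT_i$ if $a_{ij}=0$; $T_iT_jT_i=T_jT_iT_j$ if $a_{ij}a_{ji}=1$; $(T_iT_j)^2=(T_jT_i)^2$ if $a_{ij}a_{ji}=2$; $(T_iT_j)^3=(T_jT_i)^3$ if $a_{ij}a_{ji}=3$. The $s_i$ are the simple reflections of the Weyl group. *)

(* Defs.v *)
From mathcomp Require Import all_boot all_algebra fraction.
From mathcomp Require Import Rstruct.
From mathcomp Require Import complex.
Set Implicit Arguments. Unset Strict Implicit. Unset Printing Implicit Defensive.
Import GRing.Theory Num.Theory.
Local Open Scope ring_scope.

Definition C : fieldType := complex Rdefinitions.R.

Definition ratfun : fieldType := {fraction {poly C}}.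

Definition shift (c : C) (f : ratfun) : ratfun :=
  let r := repr f in
  (tofrac (r.1 \Po ('X - c%:P))) / (tofrac (r.2 \Po ('X - c%:P))).

Definition is_GCM (l : nat) (A : 'M[int]_l) : Prop :=
  (forall i, A i i = 2%:Z) /\
  (forall i j, i != j -> A i j <= 0) /\
  (forall i j, A i j = 0 <-> A j i = 0).

Definition indecomposable (l : nat) (A : 'M[int]_l) : Prop :=
  forall J : {set 'I_l}, J != set0 -> J != setT ->
    exists j k, j \in J /\ k \notin J /\ A j k != 0.

Definition symmetrizes (l : nat) (d : 'I_l -> nat) (A : 'M[int]_l) : Prop :=
  forall i j, (d i)%:Z * A i j = (d j)%:Z * A j i.

Definition coprime_pos (l : nat) (d : 'I_l -> nat) : Prop :=
  (forall i, 0 < d i)%N /\ (\big[gcdn/0]_(i < l) d i = 1)%N.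

(* finite type: the symmetrized matrix DA is positive definite *)
Definition pos_def_sym (l : nat) (d : 'I_l -> nat) (A : 'M[int]_l) : Prop :=
  forall x : 'I_l -> rat, (exists i, x i != 0) ->
    0 < \sum_(i < l) \sum_(j < l) x i * ((d i)%:Z * A i j)%:~R * x j.

(* A is the Cartan matrix of a complex simple Lie algebra of rank l (with
   symmetrizer d): an indecomposable generalized Cartan matrix of finite
   type, with D = diag(d) as in the statement. *)
Definition simple_cartan (l : nat) (A : 'M[int]_l) (d : 'I_l -> nat) : Prop :=
  (0 < l)%N /\ is_GCM A /\ indecomposable A /\ symmetrizes d A /\
  coprime_pos d /\ pos_def_sym d A.

Definition tuple_rf (l : nat) := 'I_l -> ratfun.

Definition inP (l : nat) (P : tuple_rf l) : Prop := forall i, P i != 0.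

Definition half (x : C) : C := x / 2%:R.

Definition Tmap (l : nat) (A : 'M[int]_l) (d : 'I_l -> nat) (j : 'I_l)
  (P : tuple_rf l) : tuple_rf l :=
  fun i =>
    if i == j then (shift (d j)%:R (P j))^-1
    else if A i j == 0 then P i
    else if A i j == -1 then P i * shift (half (d i)%:R) (P j)
    else if A i j == -2 then P i * shift 1 (P j) * P j
    else if A i j == -3 then
      P i * shift (half 3%:R) (P j) * shift (half 1) (P j)
          * shift (- half 1) (P j)
    else P i. (* unreachable for finite type *)

Definition braid_m (l : nat) (A : 'M[int]_l) (i j : 'I_l) : nat :=
  let p := A i j * A j i in
  if p == 0 then 2 else if p == 1 then 3 else if p == 2 then 4 else 6.

Fixpoint alt {T : Type} (f g : T -> T) (m : nat) : T -> T :=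
  match m with
  | 0 => id
  | m'.+1 => fun x => f (alt g f m' x)
  end.

(* Main.v *)
Require Import Defs.
From mathcomp Require Import all_boot all_order all_algebra fraction.
From mathcomp Require Import generic_quotient.
From mathcomp Require Import Rstruct complex.
From mathcomp Require Import ring lra zify.
From Stdlib Require Import FunctionalExtensionality.
Set Implicit Arguments. Unset Strict Implicit. Unset Printing Implicit Defensive.
Import GRing.Theory Num.Theory.
Local Open Scope ring_scope.

Module Part1.
Local Open Scope quotient_scope.

Lemma fracE (R : idomainType) (x : {fraction R}) :
  x = tofrac (\n_(repr x)) / tofrac (\d_(repr x)).
Proof.
have H : forall r : {ratio R}, \pi_({fraction R}) r = tofrac (\n_r) / tofrac (\d_r).
  move=> r.
  have d0 := denom_ratioP r.
  apply: (@mulIf _ (tofrac (\d_r))); first by rewrite tofrac_eq0.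
  rewrite mulfVK ?tofrac_eq0 //.
  have -> : forall a b : {fraction R}, a * b = FracField.mul a b by [].
  have T : forall a : R, tofrac a = \pi_({fraction R}) (Ratio a 1).
    by move=> a; unlock tofrac.
  rewrite !T -FracField.pi_mul.
  apply/eqmodP; rewrite /= FracField.equivfE /FracField.mulf.
  rewrite !numden_Ratio ?mulf_neq0 ?oner_eq0 //.
  by rewrite !mulr1 mulrC.
by rewrite -{1}[x]reprK H.
Qed.

Definition cp (c : C) (p : {poly C}) : {poly C} := p \Po ('X - c%:P).

Lemma cp_eq0 c p : (cp c p == 0) = (p == 0).
Proof. by rewrite /cp comp_poly2_eq0 // size_XsubC. Qed.

Lemma cpM c p q : cp c (p * q) = cp c p * cp c q.
Proof. by rewrite /cp comp_polyM. Qed.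

Lemma cpD c p q : cp c (p + q) = cp c p + cp c q.
Proof. by rewrite /cp comp_polyD. Qed.

Lemma cp1 c : cp c 1 = 1.
Proof. by rewrite /cp comp_polyC. Qed.

Lemma cpA a b p : cp a (cp b p) = cp (a + b) p.
Proof.
rewrite /cp -comp_polyA; congr (_ \Po _).
rewrite comp_polyB comp_polyX comp_polyC rmorphD /=.
by rewrite opprD addrA.
Qed.

Lemma cp0 p : cp 0 p = p.
Proof. by rewrite /cp subr0 comp_polyXr. Qed.

Lemma shiftE c (f : ratfun) : shift c f =
  tofrac (cp c (\n_(repr f))) / tofrac (cp c (\d_(repr f))).
Proof. by []. Qed.

Lemma shift_frac c (p q : {poly C}) : q != 0 ->
  shift c (tofrac p / tofrac q) = tofrac (cp c p) / tofrac (cp c q).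
Proof.
move=> q0.
rewrite shiftE.
set f := tofrac p / tofrac q.
have d0 : \d_(repr f) != 0 by [].
have E : tofrac (\n_(repr f)) / tofrac (\d_(repr f)) = tofrac p / tofrac q.
  by rewrite -fracE.
have E2 : \n_(repr f) * q = p * \d_(repr f).
  apply/eqP; rewrite -tofrac_eq !tofracM.
  move/eqP: E; rewrite eqr_div ?tofrac_eq0 //.
apply/eqP; rewrite eqr_div ?tofrac_eq0 ?cp_eq0 //.
by rewrite -!tofracM -!cpM E2.
Qed.

Section ShiftMorph.
Variable c : C.

Lemma shiftD_ (f g : ratfun) : shift c (f + g) = shift c f + shift c g.
Proof.
rewrite [f]fracE [g]fracE.
set a := \n_(repr f); set b := \d_(repr f); set a' := \n_(repr g); set b' := \d_(repr g).
have b0 : b != 0 by exact: denom_ratioP. have b0' : b' != 0 by exact: denom_ratioP.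
rewrite addf_div ?tofrac_eq0 // -!tofracM -tofracD.
rewrite !shift_frac ?mulf_neq0 //.
by rewrite addf_div ?tofrac_eq0 ?cp_eq0 // -!tofracM -tofracD cpD !cpM.
Qed.

Lemma shiftM (f g : ratfun) : shift c (f * g) = shift c f * shift c g.
Proof.
rewrite [f]fracE [g]fracE.
set a := \n_(repr f); set b := \d_(repr f); set a' := \n_(repr g); set b' := \d_(repr g).
have b0 : b != 0 by exact: denom_ratioP. have b0' : b' != 0 by exact: denom_ratioP.
rewrite mulf_div -!tofracM !shift_frac ?mulf_neq0 //.
by rewrite mulf_div -!tofracM !cpM.
Qed.

Lemma shift1 : shift c 1 = 1.
Proof.
have -> : (1 : ratfun) = tofrac 1 / tofrac 1 by rewrite tofrac1 divr1.
by rewrite shift_frac ?oner_eq0 // cp1 tofrac1 divr1.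
Qed.

Lemma shift0 : shift c 0 = 0.
Proof.
have H := shiftD_ 0 0; rewrite addr0 in H.
by apply: (@addrI _ (shift c 0)); rewrite addr0 -H.
Qed.

End ShiftMorph.

Lemma shiftA a b f : shift a (shift b f) = shift (a + b) f.
Proof.
rewrite (fracE f); move: (\n_(repr f)) (\d_(repr f)) (denom_ratioP (repr f)) => n d d0.
rewrite (shift_frac b _ d0) (shift_frac (a + b) _ d0) shift_frac ?cp_eq0 //.
by rewrite !cpA.
Qed.

Lemma shift_0 f : shift 0 f = f.
Proof. by rewrite [f in RHS]fracE shiftE !cp0 -fracE. Qed.

Lemma shift_eq0 c f : (shift c f == 0) = (f == 0).
Proof.
apply/idP/idP => [H|/eqP->]; last by rewrite shift0.
have : shift (- c) (shift c f) = f by rewrite shiftA addNr shift_0.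
by move/eqP: H => ->; rewrite shift0 => <-.
Qed.

Lemma shiftV c f : shift c f^-1 = (shift c f)^-1.
Proof.
have [->|f0] := eqVneq f 0; first by rewrite invr0 shift0 invr0.
apply: (@mulIf _ (shift c f)); first by rewrite shift_eq0.
by rewrite -shiftM !mulVf ?shift_eq0 // shift1.
Qed.

Lemma shiftXn c f (n : nat) : shift c (f ^+ n) = shift c f ^+ n.
Proof. by elim: n => [|n IH]; rewrite ?expr0 ?shift1 // !exprS shiftM IH. Qed.

Lemma shiftXz c f (n : int) : shift c (f ^ n) = shift c f ^ n.
Proof.
case: n => n; first exact: shiftXn.
rewrite NegzE -!exprz_inv.
by have := shiftXn c f^-1 n.+1; rewrite shiftV.
Qed.

End Part1.
Import Part1.

Module Part2.

Definition LL := seq (int * int).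

Definition ev (q : C) (L : LL) (f : ratfun) : ratfun :=
  \prod_(p <- L) shift (p.1%:~R * q) f ^ p.2.

Definition negL (L : LL) : LL := [seq (p.1, - p.2) | p <- L].
Definition mulL (L M : LL) : LL := [seq (a.1 + b.1, a.2 * b.2) | a <- L, b <- M].

Section Ev.
Variable q : C.

Lemma ev_nil f : ev q [::] f = 1.
Proof. by rewrite /ev big_nil. Qed.

Lemma ev_cat L M f : ev q (L ++ M) f = ev q L f * ev q M f.
Proof. by rewrite /ev big_cat. Qed.

Lemma ev_cons p L f : ev q (p :: L) f = shift (p.1%:~R * q) f ^ p.2 * ev q L f.
Proof. by rewrite /ev big_cons. Qed.

Lemma ev_neq0 L f : f != 0 -> ev q L f != 0.
Proof.
move=> f0; rewrite /ev; elim: L => [|p L IH]; first by rewrite big_nil oner_eq0.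
rewrite big_cons; apply: mulf_neq0; last exact: IH.
apply: expfz_neq0; rewrite shift_eq0; exact: f0.
Qed.

Lemma evM L f g : ev q L (f * g) = ev q L f * ev q L g.
Proof.
elim: L => [|p L IH]; first by rewrite !ev_nil mulr1.
by rewrite !ev_cons IH shiftM expfzMl mulrACA.
Qed.

Lemma ev1 L : ev q L 1 = 1.
Proof.
elim: L => [|p L IH]; first by rewrite ev_nil.
by rewrite ev_cons IH shift1 exp1rz mulr1.
Qed.

Lemma ev_neg L f : ev q (negL L) f = (ev q L f)^-1.
Proof.
elim: L => [|p L IH]; first by rewrite !ev_nil invr1.
change (negL (p :: L)) with ((p.1, - p.2) :: negL L).
by rewrite [LHS]ev_cons IH ev_cons invfM invr_expz.
Qed.

Lemma prodXz (L : LL) (F : int * int -> ratfun) (n : int) :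
  (\prod_(p <- L) F p) ^ n = \prod_(p <- L) F p ^ n.
Proof.
elim: L => [|p L IH]; first by rewrite !big_nil exp1rz.
by rewrite !big_cons expfzMl IH.
Qed.

Lemma shift_prod c (M : LL) (F : int * int -> ratfun) :
  shift c (\prod_(p <- M) F p) = \prod_(p <- M) shift c (F p).
Proof.
elim: M => [|b M IH]; first by rewrite !big_nil shift1.
by rewrite !big_cons shiftM IH.
Qed.

Lemma ev_comp L M f : ev q L (ev q M f) = ev q (mulL L M) f.
Proof.
elim: L => [|a L IH]; first by rewrite ev_nil /mulL /= ev_nil.
rewrite ev_cons /mulL allpairs_cons ev_cat -/(mulL L M) IH; congr (_ * _).
rewrite {2}/ev big_map /ev shift_prod prodXz.
apply: eq_bigr => b _.
rewrite shiftXz shiftA exprz_exp /= rmorphD mulrDl [_ * b.2]mulrC [_ + _]addrC.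
reflexivity.
Qed.

Fixpoint mult (L : LL) (k : int) : int :=
  match L with
  | [::] => 0
  | p :: L' => if p.1 == k then p.2 + mult L' k else mult L' k
  end.

Lemma ev_mult (L : LL) (s : seq int) f : f != 0 -> uniq s ->
  {subset map fst L <= s} ->
  ev q L f = \prod_(k <- s) shift (k%:~R * q) f ^ mult L k.
Proof.
move=> f0 us; elim: L => [|p L IH] sub.
  by rewrite ev_nil big1 // => k _; rewrite expr0z.
have sub' : {subset map fst L <= s}.
  by move=> x xL; apply: sub; rewrite map_cons inE xL orbT.
have ps : p.1 \in s by apply: sub; rewrite map_cons inE eqxx.
rewrite ev_cons (IH sub').
have E : forall k, shift (k%:~R * q) f ^ mult (p :: L) k =
   (if k == p.1 then shift (k%:~R * q) f ^ p.2 else 1) * shift (k%:~R * q) f ^ mult L k.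
  move=> k /=; rewrite [k == _]eq_sym; case: (p.1 == k).
    by apply: expfzDr; rewrite shift_eq0.
  by rewrite mul1r.
rewrite (eq_bigr _ (fun k _ => E k)) big_split /=.
congr (_ * _).
rewrite (bigD1_seq p.1 ps us) /= eqxx big1 ?mulr1 //.
by move=> k /negbTE ->.
Qed.

Lemma ev_eq (L M : LL) f : f != 0 ->
  all (fun k => mult L k == mult M k) (undup (map fst (L ++ M))) ->
  ev q L f = ev q M f.
Proof.
move=> f0 /allP H.
have us := undup_uniq (map fst (L ++ M)).
rewrite (ev_mult f0 us) ?(ev_mult f0 us); last 2 first.
- by move=> x xM; rewrite mem_undup map_cat mem_cat xM orbT.
- by move=> x xL; rewrite mem_undup map_cat mem_cat xL.
rewrite big_seq_cond [in RHS]big_seq_cond; apply: eq_bigr => k /andP [ks _].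
by rewrite (eqP (H k ks)).
Qed.

End Ev.

End Part2.
Import Part2.

Module Part3.

Opaque shift Defs.half.
Section Machine.
Variables (l : nat) (A : 'M[int]_l) (d : 'I_l -> nat).

Definition G (k j : 'I_l) (f : ratfun) : ratfun :=
  if A k j == 0 then 1
  else if A k j == -1 then shift (Defs.half (d k)%:R) f
  else if A k j == -2 then shift 1 f * f
  else if A k j == -3 then
    shift (Defs.half 3%:R) f * shift (Defs.half 1) f * shift (- Defs.half 1) f
  else 1.

Lemma TmapE j (Q : tuple_rf l) k :
  Tmap A d j Q k = if k == j then (shift (d j)%:R (Q j))^-1
                   else Q k * G k j (Q j).
Proof.
rewrite /Tmap /G; case: (k == j); first reflexivity.
case: (A k j == 0); first by rewrite mulr1.
case: (A k j == -1); first reflexivity.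
case: (A k j == -2); first by rewrite mulrA.
case: (A k j == -3).
  have H : forall x y z w : ratfun, x * y * z * w = x * (y * z * w) by move=> *; ring.
  exact: H.
by rewrite mulr1.
Qed.

Lemma GM k j f g : G k j (f * g) = G k j f * G k j g.
Proof.
rewrite /G; case: (A k j == 0); first by rewrite mulr1.
case: (A k j == -1); first by rewrite shiftM.
case: (A k j == -2); first by rewrite !shiftM mulrACA.
case: (A k j == -3); last by rewrite mulr1.
rewrite !shiftM.
have H : forall a b c a' b' c' : ratfun, a * a' * (b * b') * (c * c') = a * b * c * (a' * b' * c').
  by move=> a b c a' b' c'; ring.
exact: H.
Qed.

Lemma G1 k j : G k j 1 = 1.
Proof.
rewrite /G; case: (A k j == 0); first reflexivity.
case: (A k j == -1); first exact: shift1.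
case: (A k j == -2); first by rewrite shift1 mulr1.
case: (A k j == -3); last reflexivity.
by rewrite !shift1 !mulr1.
Qed.

Lemma G_neq0 k j f : f != 0 -> G k j f != 0.
Proof.
move=> f0; rewrite /G; case: (A k j == 0); first exact: oner_neq0.
case: (A k j == -1); first by rewrite shift_eq0.
case: (A k j == -2).
  by apply: mulf_neq0; [rewrite shift_eq0|].
case: (A k j == -3); last exact: oner_neq0.
by apply: mulf_neq0; [apply: mulf_neq0|]; rewrite shift_eq0.
Qed.

Variables (q : C) (P : tuple_rf l).

Definition semV (xa xb : ratfun) (V : LL * LL) := ev q V.1 xa * ev q V.2 xb.

Record St := mkSt { sX : LL * LL; sY : LL * LL; sAX : LL * LL; sAY : LL * LL }.

Definition Rel (a b : 'I_l) (Q : tuple_rf l) (s : St) :=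
  [/\ Q a = semV (P a) (P b) (sX s), Q b = semV (P a) (P b) (sY s) &
  forall k, k != a -> k != b ->
    Q k = P k * G k a (semV (P a) (P b) (sAX s)) * G k b (semV (P a) (P b) (sAY s))].

Definition stepA (ea : int) (Gba : LL) (s : St) : St :=
  mkSt (negL (mulL [:: (ea, 1)] (sX s).1), negL (mulL [:: (ea, 1)] (sX s).2))
       ((sY s).1 ++ mulL Gba (sX s).1, (sY s).2 ++ mulL Gba (sX s).2)
       ((sAX s).1 ++ (sX s).1, (sAX s).2 ++ (sX s).2)
       (sAY s).

Definition swapV (V : LL * LL) : LL * LL := (V.2, V.1).
Definition swapS (s : St) : St :=
  mkSt (swapV (sY s)) (swapV (sX s)) (swapV (sAY s)) (swapV (sAX s)).
Definition stepB (eb : int) (Gab : LL) (s : St) : St := swapS (stepA eb Gab (swapS s)).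

Lemma swapSK s : swapS (swapS s) = s.
Proof. by case: s => [[? ?] [? ?] [? ?] [? ?]]. Qed.

Lemma semV_swap xa xb V : semV xa xb (swapV V) = semV xb xa V.
Proof. by rewrite /semV /= mulrC. Qed.

Lemma Rel_swap a b Q s : Rel a b Q s -> Rel b a Q (swapS s).
Proof.
case=> Ha Hb Hk; split; rewrite /swapS /= ?semV_swap; [exact: Hb|exact: Ha|].
move=> k kb ka; rewrite (Hk k ka kb); exact: mulrAC.
Qed.

Lemma semV_neq0 xa xb V : xa != 0 -> xb != 0 -> semV xa xb V != 0.
Proof. move=> ha hb; rewrite /semV; apply: mulf_neq0; exact: ev_neq0. Qed.

Lemma ev_single e f : ev q [:: (e, 1)] f = shift (e%:~R * q) f.
Proof. by rewrite ev_cons ev_nil mulr1 expr1z. Qed.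

Lemma stepA_ok a b ea Gba Q s :
  a != b -> P a != 0 -> P b != 0 -> (d a)%:R = ea%:~R * q ->
  (forall f, f != 0 -> G b a f = ev q Gba f) ->
  Rel a b Q s -> Rel a b (Tmap A d a Q) (stepA ea Gba s).
Proof.
move=> ab ha hb ed HG [Ha Hb Hk].
have nX := semV_neq0 (sX s) ha hb.
split.
- rewrite TmapE eqxx Ha ed /semV /= !ev_neg -!ev_comp !ev_single.
  rewrite shiftM; exact: invfM.
- rewrite TmapE eq_sym (negbTE ab) Hb Ha (HG _ nX) /semV /= evM !ev_cat -!ev_comp.
  exact: mulrACA.
- move=> k ka kb; rewrite TmapE (negbTE ka) (Hk k ka kb) /semV /= !ev_cat.
  rewrite Ha /semV.
  have H2 : forall x y u v, G k a (x * u * (y * v)) = G k a (x * y) * G k a (u * v).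
    move=> x y u v; rewrite mulrACA; exact: GM.
  rewrite H2.
  have H : forall p x y z : ratfun, p * x * z * y = p * (x * y) * z by move=> *; ring.
  exact: H.
Qed.

Lemma stepB_ok a b eb Gab Q s :
  a != b -> P a != 0 -> P b != 0 -> (d b)%:R = eb%:~R * q ->
  (forall f, f != 0 -> G a b f = ev q Gab f) ->
  Rel a b Q s -> Rel a b (Tmap A d b Q) (stepB eb Gab s).
Proof.
move=> ab ha hb ed HG /Rel_swap H.
have ba : b != a by rewrite eq_sym.
exact: (Rel_swap (stepA_ok ba hb ha ed HG H)).
Qed.

Lemma alt_ok (T1 T2 : Type) (R : T1 -> T2 -> Prop) f g sf sg m x s :
  (forall x s, R x s -> R (f x) (sf s)) ->
  (forall x s, R x s -> R (g x) (sg s)) ->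
  R x s -> R (alt f g m x) (alt sf sg m s).
Proof.
move=> Hf Hg; elim: m f g sf sg Hf Hg x s => [|m IH] f g sf sg Hf Hg x s Hxs //=.
apply: (Hf); exact: (IH g f sg sf Hg Hf x s Hxs).
Qed.

Definition eqL (L M : LL) : bool :=
  all (fun k => mult L k == mult M k) (undup (map fst (L ++ M))).
Definition eqV (V W : LL * LL) := eqL V.1 W.1 && eqL V.2 W.2.
Definition eqSt (s t : St) :=
  [&& eqV (sX s) (sX t), eqV (sY s) (sY t), eqV (sAX s) (sAX t) & eqV (sAY s) (sAY t)].

Lemma eqV_sem xa xb V W : xa != 0 -> xb != 0 -> eqV V W -> semV xa xb V = semV xa xb W.
Proof.
move=> ha hb /andP [h1 h2].
by rewrite /semV (ev_eq _ ha h1) (ev_eq _ hb h2).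
Qed.

Lemma Rel_eq a b Q1 Q2 s1 s2 : P a != 0 -> P b != 0 ->
  Rel a b Q1 s1 -> Rel a b Q2 s2 -> eqSt s1 s2 -> Q1 = Q2.
Proof.
move=> ha hb [H1a H1b H1k] [H2a H2b H2k] /and4P [e1 e2 e3 e4].
apply: functional_extensionality => k.
have [->|ka] := eqVneq k a; first by rewrite H1a H2a (eqV_sem ha hb e1).
have [->|kb] := eqVneq k b; first by rewrite H1b H2b (eqV_sem ha hb e2).
by rewrite (H1k k ka kb) (H2k k ka kb) (eqV_sem ha hb e3) (eqV_sem ha hb e4).
Qed.

Definition st0 : St :=
  mkSt ([:: (0, 1)], [::]) ([::], [:: (0, 1)]) ([::], [::]) ([::], [::]).

Lemma Rel0 a b : a != b -> Rel a b P st0.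
Proof.
move=> ab; split; rewrite /semV /=.
- rewrite ev_nil mulr1 ev_single mulr0z mul0r shift_0; reflexivity.
- rewrite ev_nil mul1r ev_single mulr0z mul0r shift_0; reflexivity.
- move=> k _ _; rewrite !ev_nil mulr1 !G1 !mulr1; reflexivity.
Qed.

End Machine.

End Part3.
Import Part3.

Module Part4.
Import Order.TTheory.

Section Quad.
Variables (l : nat) (A : 'M[int]_l) (d : 'I_l -> nat).
Hypothesis hdiag : forall i, A i i = 2%:Z.
Hypothesis hoff : forall i j, i != j -> A i j <= 0.
Hypothesis hsym : symmetrizes d A.

Definition B i j : rat := ((d i)%:Z * A i j)%:~R.
Definition Qf (x : 'I_l -> rat) := \sum_(i < l) \sum_(j < l) x i * B i j * x j.
Definition Bx (x : 'I_l -> rat) w := \sum_(k < l) B w k * x k.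

Lemma BE i j : B i j = (d i)%:R * (A i j)%:~R.
Proof. by rewrite /B intrM. Qed.

Lemma B_sym i j : B i j = B j i.
Proof. by rewrite /B hsym. Qed.

Lemma B_diag i : B i i = 2 * (d i)%:R.
Proof. by rewrite BE hdiag mulrC. Qed.

Lemma B_off i j : i != j -> B i j <= 0.
Proof.
move=> ij; rewrite BE; apply: mulr_ge0_le0; first exact: ler0n.
by rewrite lerz0; apply: hoff.
Qed.

Lemma Qf_ext x y : (forall k, x k = y k) -> Qf x = Qf y.
Proof.
move=> H; apply: eq_bigr => i _; apply: eq_bigr => j _; by rewrite !H.
Qed.

Definition evec (w : 'I_l) (c : rat) := fun k : 'I_l => if k == w then c else 0.

Lemma sum_e (F : 'I_l -> rat) w c : \sum_(j < l) F j * evec w c j = F w * c.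
Proof.
rewrite (bigD1 w) //= /evec eqxx big1 ?addr0 // => j /negbTE ->; exact: mulr0.
Qed.

Lemma sum_e' (F : 'I_l -> rat) w c : \sum_(j < l) evec w c j * F j = c * F w.
Proof.
rewrite (bigD1 w) //= /evec eqxx big1 ?addr0 // => j /negbTE ->; exact: mul0r.
Qed.

Lemma Qf_add x w c :
  Qf (fun k => x k + evec w c k) = Qf x + 2 * c * Bx x w + c ^+ 2 * B w w.
Proof.
rewrite /Qf.
have E : forall i j, (x i + evec w c i) * B i j * (x j + evec w c j) =
  x i * B i j * x j + (x i * B i j * evec w c j + evec w c i * (B i j * x j))
  + evec w c i * B i j * evec w c j by move=> i j; ring.
under eq_bigr do under eq_bigr do rewrite E.
have I : forall i, \sum_(j < l) (x i * B i j * x j + (x i * B i j * evec w c j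
      + evec w c i * (B i j * x j)) + evec w c i * B i j * evec w c j) =
   \sum_(j < l) x i * B i j * x j + (x i * B i w * c + evec w c i * Bx x i)
      + evec w c i * B i w * c.
  move=> i; rewrite !big_split /= sum_e sum_e -mulr_sumr; reflexivity.
under eq_bigr do rewrite I.
rewrite !big_split /=.
rewrite (sum_e' (fun i => Bx x i)).
have -> : \sum_(i < l) x i * B i w * c = c * \sum_(k < l) B w k * x k.
  rewrite mulr_sumr; apply: eq_bigr => i _; rewrite B_sym; ring.
have -> : \sum_(i < l) evec w c i * B i w * c = c * (B w w * c).
  rewrite -(sum_e' (fun i => B i w * c)); apply: eq_bigr => i _; by rewrite mulrA.
rewrite -/(Bx x w); ring.
Qed.

Lemma Qf0 : Qf (fun _ => 0) = 0.
Proof. by rewrite /Qf big1 // => i _; rewrite big1 // => j _; rewrite !mul0r. Qed.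

Lemma Bx_le x w v : (forall k, 0 <= x k) -> x w = 0 -> Bx x w <= B w v * x v.
Proof.
move=> x0 xw; rewrite /Bx (bigD1 v) //= gerDl.
apply: sumr_le0 => k kv.
have [->|kw] := eqVneq k w; first by rewrite xw mulr0.
apply: mulr_le0_ge0 => //; apply: B_off; by rewrite eq_sym.
Qed.


Definition se : rel 'I_l := fun u v => (A u v == -1) && (A v u == -1).

Lemma se_d u v : se u v -> d u = d v.
Proof.
case/andP => /eqP h1 /eqP h2; have := hsym u v; rewrite h1 h2.
by move=> /eqP; rewrite !mulrN1 eqr_opp => /eqP [].
Qed.

Lemma path_d x p : path se x p -> forall v, v \in x :: p -> d v = d x.
Proof.
elim: p x => [|y p IH] x /=; first by move=> _ v; rewrite inE => /eqP ->.
case/andP => hxy hp v; rewrite inE => /orP [/eqP -> //|vy].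
by rewrite (IH y hp v vy) (se_d hxy).
Qed.

Definition ind (s : seq 'I_l) := fun k : 'I_l => if k \in s then (1 : rat) else 0.

Lemma ind_ge0 s k : 0 <= ind s k.
Proof. by rewrite /ind; case: ifP. Qed.

Lemma Qf_cons x s : x \notin s ->
  Qf (ind (x :: s)) = Qf (ind s) + 2 * Bx (ind s) x + B x x.
Proof.
move=> xs.
rewrite (@Qf_ext _ (fun k => ind s k + evec x 1 k)); last first.
  move=> k; rewrite /ind /evec inE; have [->|kx] := eqVneq k x.
    by rewrite (negbTE xs) add0r.
  by rewrite /= addr0.
by rewrite Qf_add mulr1 expr1n mul1r.
Qed.

Lemma chain p x : path se x p -> uniq (x :: p) ->
  Qf (ind (x :: p)) <= 2 * (d x)%:R.
Proof.
elim: p x => [|y p IH] x.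
  move=> _ _; rewrite Qf_cons // (@Qf_ext _ (fun _ => 0)); last by move=> k.
  rewrite Qf0 /Bx big1 ?mulr0 ?add0r ?B_diag //= => k _; by rewrite mulr0.
move=> /= /andP [hxy hp] /andP [xs us].
rewrite Qf_cons //.
have h1 := IH y hp us.
have h2 := @Bx_le (ind (y :: p)) x y (ind_ge0 _) _.
have e1 : ind (y :: p) x = 0 by rewrite /ind (negbTE xs).
have e2 : ind (y :: p) y = 1 by rewrite /ind mem_head.
rewrite e2 mulr1 in h2; have {}h2 := h2 e1.
have dxy := se_d hxy.
have Bxy : B x y = - (d x)%:R by case/andP: hxy => /eqP h _; rewrite BE h mulrN1.
rewrite B_diag; rewrite -dxy in h1; lra.
Qed.

Hypothesis hpd : pos_def_sym d A.

Lemma two_multi s p t m : path se s p -> uniq (s :: p) -> t \notin s :: p ->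
  m \notin s :: p -> t != m ->
  2 <= A s t * A t s -> 2 <= A (last s p) m * A m (last s p) -> False.
Proof.
move=> hp us ts ms tm h1 h2.
set k := last s p.
have kK : k \in s :: p by exact: mem_last.
have st : s != t by apply: contraNneq ts => <-; rewrite mem_head.
have km : k != m by apply: contraNneq ms => <-.
have kt : k != t by apply: contraNneq ts => <-.
have sm : s != m by apply: contraNneq ms => <-; rewrite mem_head.
set a : rat := - (A t s)%:~R / 2.
set b : rat := - (A m k)%:~R / 2.
set y1 := fun k' => ind (s :: p) k' + evec t a k'.
set y2 := fun k' => y1 k' + evec m b k'.
have ha : 0 <= a.
  rewrite /a; have : A t s <= 0 by apply: hoff; rewrite eq_sym.
  rewrite -(ler_int rat) => H; lra.
have hb : 0 <= b.
  rewrite /b; have : A m k <= 0 by apply: hoff; rewrite eq_sym.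
  rewrite -(ler_int rat) => H; lra.
have pos : 0 < Qf y2.
  apply: hpd; exists s.
  rewrite /y2 /y1 /ind /evec mem_head (negbTE st) (negbTE sm) !addr0.
  exact: oner_neq0.
have Q2 : Qf y2 = Qf y1 + 2 * b * Bx y1 m + b ^+ 2 * B m m by rewrite Qf_add.
have Q1 : Qf y1 = Qf (ind (s :: p)) + 2 * a * Bx (ind (s :: p)) t + a ^+ 2 * B t t.
  by rewrite Qf_add.
have c0 := chain hp us.
have b1 : Bx (ind (s :: p)) t <= B t s.
  have := @Bx_le (ind (s :: p)) t s (ind_ge0 _) _.
  rewrite /ind (negbTE ts) mem_head mulr1; by apply.
have y1ge0 : forall k', 0 <= y1 k'.
  move=> k'; rewrite /y1 /evec; case: ifP => _; last by rewrite addr0 ind_ge0.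
  by apply: addr_ge0 => //; exact: ind_ge0.
have b2 : Bx y1 m <= B m k.
  have := @Bx_le y1 m k y1ge0.
  rewrite /y1 /ind /evec (negbTE ms) (eq_sym m t) (negbTE tm) kK (negbTE kt).
  by rewrite addr0 mulr1; apply.
have dk : d k = d s by apply: (path_d hp).
have e1 : (d t)%:R * (A t s)%:~R = (d s)%:R * (A s t)%:~R :> rat.
  by rewrite -!BE /B hsym.
have e2 : (d m)%:R * (A m k)%:~R = (d s)%:R * (A k m)%:~R :> rat.
  by rewrite -dk -!BE /B hsym.
have p1 : 2 <= (A s t)%:~R * (A t s)%:~R :> rat by move: h1; rewrite -(ler_int rat) intrM.
have p2 : 2 <= (A k m)%:~R * (A m k)%:~R :> rat by move: h2; rewrite -(ler_int rat) intrM.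
move: pos; rewrite Q2 Q1 !B_diag !BE in b1 b2 *.
have dsge0 : 0 <= (d s)%:R :> rat by exact: ler0n.
have f1 : (d t)%:R * (A t s)%:~R ^+ 2 = (d s)%:R * ((A s t)%:~R * (A t s)%:~R) :> rat.
  by rewrite expr2 mulrA e1 mulrA.
have f2 : (d m)%:R * (A m k)%:~R ^+ 2 = (d s)%:R * ((A k m)%:~R * (A m k)%:~R) :> rat.
  by rewrite expr2 mulrA e2 mulrA.
have g1 : 2 * (d s)%:R <= (d s)%:R * ((A s t)%:~R * (A t s)%:~R) :> rat by nra.
have g2 : 2 * (d s)%:R <= (d s)%:R * ((A k m)%:~R * (A m k)%:~R) :> rat by nra.
have X1 : 2 * a * Bx (ind (s :: p)) t <= 2 * a * ((d t)%:R * (A t s)%:~R).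
  by apply: ler_wpM2l => //; lra.
have X2 : 2 * b * Bx y1 m <= 2 * b * ((d m)%:R * (A m k)%:~R).
  by apply: ler_wpM2l => //; lra.
have Y1 : 2 * a * ((d t)%:R * (A t s)%:~R) + a ^+ 2 * (2 * (d t)%:R)
   = - ((d t)%:R * (A t s)%:~R ^+ 2) / 2.
  by rewrite /a; field.
have Y2 : 2 * b * ((d m)%:R * (A m k)%:~R) + b ^+ 2 * (2 * (d m)%:R)
   = - ((d m)%:R * (A m k)%:~R ^+ 2) / 2.
  by rewrite /b; field.
clear b1 b2 p1 p2 e1 e2 Q1 Q2 h1 h2 ha hb dsge0 y1ge0.
move: c0 X1 X2 Y1 Y2 f1 f2 g1 g2.
move: (Qf (ind (s :: p))) (Bx (ind (s :: p)) t) (Bx y1 m) => Q0 u v.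
clear y2 y1. move: a b ((d t)%:R : rat) ((d m)%:R : rat) ((d s)%:R : rat) => a0 b0 dt dm ds.
move: ((A t s)%:~R : rat) ((A s t)%:~R : rat) ((A m k)%:~R : rat) ((A k m)%:~R : rat).
move=> al be ga et.
lra.
Qed.

Lemma prod_le3 i j : i != j -> A i j * A j i <= 3.
Proof.
move=> ij; rewrite leNgt; apply/negP => H.
set t : rat := - (A i j)%:~R / 2.
set y := fun k => (fun _ => 0 : rat) k + evec j 1 k.
have Qy : Qf y = 2 * (d j)%:R.
  by rewrite Qf_add Qf0 /Bx big1 ?mulr0 ?add0r ?expr1n ?mul1r ?B_diag // => k _; rewrite mulr0.
have Bxy : Bx y i = B i j.
  rewrite /Bx /y; under eq_bigr do rewrite add0r; by rewrite sum_e mulr1.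
have pos : 0 < Qf (fun k => y k + evec i t k).
  have ji : (j == i) = false by rewrite eq_sym (negbTE ij).
  apply: hpd; exists j; rewrite /y /evec eqxx ji add0r addr0; exact: oner_neq0.
move: pos; rewrite Qf_add Qy Bxy B_diag BE.
have e1 : (d i)%:R * (A i j)%:~R = (d j)%:R * (A j i)%:~R :> rat.
  by rewrite -!BE /B hsym.
have H4 : 4 <= A i j * A j i by lia.
have p1 : 4 <= (A i j)%:~R * (A j i)%:~R :> rat by move: H4; rewrite -(ler_int rat) intrM.
have f1 : (d i)%:R * (A i j)%:~R ^+ 2 = (d j)%:R * ((A i j)%:~R * (A j i)%:~R) :> rat.
  rewrite expr2 mulrA e1; ring.
have dj0 : 0 <= (d j)%:R :> rat by exact: ler0n.
have g1 : 4 * (d j)%:R <= (d j)%:R * ((A i j)%:~R * (A j i)%:~R) :> rat by nra.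
have Y : 2 * t * ((d i)%:R * (A i j)%:~R) + t ^+ 2 * (2 * (d i)%:R)
   = - ((d i)%:R * (A i j)%:~R ^+ 2) / 2 by rewrite /t; field.
clear e1 p1 Qy Bxy.
move: Y f1 g1; clear y; move: t ((d i)%:R : rat) ((d j)%:R : rat) => t di dj.
move: ((A i j)%:~R : rat) ((A j i)%:~R : rat) => a b.
lra.
Qed.

Hypothesis hzero : forall i j, A i j = 0 <-> A j i = 0.
Hypothesis hpos : forall i, (0 < d i)%N.
Hypothesis hgcd : (\big[gcdn/0]_(i < l) d i = 1)%N.
Hypothesis hind : indecomposable A.

Lemma short_is_one i j : 2 <= A i j * A j i -> A j i = -1 -> d i = 1%N.
Proof.
move=> hp hji.
have ij : i != j.
  by apply/eqP => e; move: hji; rewrite e hdiag.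
have Aij : A i j <= -2 by move: hp; rewrite hji; lia.
have hs := hsym i j; rewrite hji in hs.
have dij : (d j = `|A i j| * d i)%N.
  have di0 := hpos i; nia.
have dne : d i != d j.
  have di0 := hpos i; apply/eqP; nia.
set J := [set k | connect se i k || connect se j k].
have Jd : forall k, k \in J -> (d i %| d k)%N.
  move=> k; rewrite inE => /orP [] /connectP [p hp' ->].
    by rewrite (path_d hp' (mem_last _ _)) dvdnn.
  by rewrite (path_d hp' (mem_last _ _)) dij dvdn_mull.
have [JT|JnT] := eqVneq J setT.
  have : (d i %| \big[gcdn/0]_(k < l) d k)%N.
    elim/big_ind: _ => //; first by move=> x y hx hy; rewrite dvdn_gcd hx hy.
    by move=> k _; apply: Jd; rewrite JT inE.
  by rewrite hgcd dvdn1 => /eqP.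
have J0 : J != set0.
  by apply/set0Pn; exists i; rewrite inE connect0.
have [k [m [kJ [mJ Akm]]]] := hind J0 JnT.
have km : k != m by apply: contraNneq mJ => <-.
have Amk : A m k != 0 by apply/eqP => /hzero /eqP; apply/negP.
have Akm' : A k m <= 0 := hoff km.
have Amk' : A m k <= 0 by apply: hoff; rewrite eq_sym.
have nse : ~~ se k m.
  apply: contra mJ => hkm; move: kJ; rewrite !inE => /orP [] h.
    by rewrite (connect_trans h (connect1 hkm)).
  by rewrite (connect_trans h (connect1 hkm)) orbT.
have prod : 2 <= A k m * A m k.
  move: nse Akm Amk; rewrite /se negb_and => /orP [] /eqP n1 /eqP n2 /eqP n3; nia.
have main : forall s t, d s != d t -> 2 <= A s t * A t s -> t \in J ->
    (forall v, connect se s v -> v \in J) -> connect se s k -> False.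
  move=> s t dst hst tJ hsJ /connectP [p hp' ek].
  move: ek; case: (shortenP hp') => p' hp'' up' _ ek.
  apply: (@two_multi s p' t m hp'' up').
  - apply/negP => tp; move: dst; rewrite (path_d hp'' tp) eqxx; by [].
  - apply/negP => mp; move: mJ; rewrite (hsJ m (path_connect hp'' mp)); by [].
  - by apply: contraNneq mJ => <-.
  - exact: hst.
  - by rewrite -ek.
move: kJ; rewrite inE => /orP [] hk.
  exfalso; apply: (main i j dne hp _ _ hk); first by rewrite inE connect0 orbT.
  by move=> v hv; rewrite inE hv.
exfalso; apply: (main j i _ _ _ _ hk).
- by rewrite eq_sym.
- by rewrite mulrC.
- by rewrite inE connect0.
- by move=> v hv; rewrite inE hv orbT.
Qed.

End Quad.

End Part4.
Import Part4.

Module Part5.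

Lemma two_neq0 : (2%:R : C) != 0.
Proof. by rewrite pnatr_eq0. Qed.
Lemma two_half (x : C) : (2%:Z)%:~R * Defs.half x = x.
Proof. rewrite /Defs.half mulrC divfK //; exact: two_neq0. Qed.
Lemma half_mul (n : int) : n%:~R * Defs.half 1 = Defs.half n%:~R.
Proof. by rewrite /Defs.half mul1r. Qed.

Opaque shift Defs.half.

Lemma shift_inv_cancel c f : (shift (- c) ((shift c f)^-1))^-1 = f.
Proof. by rewrite shiftV shiftA addNr shift_0 invrK. Qed.
Lemma shift_inv_cancel' c f : (shift c ((shift (- c) f)^-1))^-1 = f.
Proof. by rewrite shiftV shiftA addrN shift_0 invrK. Qed.

Section Main.
Variables (l : nat) (A : 'M[int]_l) (d : 'I_l -> nat).

Lemma T_inP j P : inP P -> inP (Tmap A d j P).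
Proof.
move=> hP k; rewrite TmapE; case: (k == j).
  rewrite invr_eq0 shift_eq0; exact: hP.
apply: mulf_neq0; first exact: hP.
apply: G_neq0; exact: hP.
Qed.

Definition Uj j (P : tuple_rf l) : ratfun := (shift (- (d j)%:R) (P j))^-1.
Definition Umap j (P : tuple_rf l) : tuple_rf l :=
  fun k => if k == j then Uj j P else P k / G A d k j (Uj j P).

Lemma Uj_neq0 j P : inP P -> Uj j P != 0.
Proof. move=> hP; rewrite /Uj invr_eq0 shift_eq0; exact: hP. Qed.

Lemma U_inP j P : inP P -> inP (Umap j P).
Proof.
move=> hP k; rewrite /Umap; case: (k == j); first exact: Uj_neq0.
apply: mulf_neq0; first exact: hP.
rewrite invr_eq0; apply: G_neq0; exact: Uj_neq0.
Qed.

Lemma U_T j P : inP P -> Umap j (Tmap A d j P) = P.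
Proof.
move=> hP; apply: functional_extensionality => k.
have UjT : Uj j (Tmap A d j P) = P j.
  rewrite /Uj TmapE eqxx; exact: shift_inv_cancel.
rewrite /Umap UjT; have [->|kj] := eqVneq k j; first reflexivity.
rewrite TmapE (negbTE kj); apply: mulfK; apply: G_neq0; exact: hP.
Qed.

Lemma T_U j P : inP P -> Tmap A d j (Umap j P) = P.
Proof.
move=> hP; apply: functional_extensionality => k.
rewrite TmapE; have [->|kj] := eqVneq k j.
  rewrite /Umap eqxx /Uj; exact: shift_inv_cancel'.
rewrite /Umap (negbTE kj) eqxx.
apply: divfK; apply: G_neq0; exact: Uj_neq0.
Qed.

Lemma braid_zero i j P : i != j -> A i j = 0 -> A j i = 0 ->
  Tmap A d i (Tmap A d j P) = Tmap A d j (Tmap A d i P).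
Proof.
move=> ij hij hji.
have Gij : forall f, G A d i j f = 1 by move=> f; rewrite /G hij eqxx.
have Gji : forall f, G A d j i f = 1 by move=> f; rewrite /G hji eqxx.
have ji : (j == i) = false by rewrite eq_sym (negbTE ij).
apply: functional_extensionality => k.
rewrite !TmapE.
have [->|ki] := eqVneq k i.
  rewrite (negbTE ij) ji !Gij !mulr1; reflexivity.
have [->|kj] := eqVneq k j.
  rewrite (negbTE ij) ji !Gji !mulr1; reflexivity.
rewrite (negbTE ij) ji !Gij !Gji !mulr1.
exact: mulrAC.
Qed.

Lemma machine i j q ea eb Gba Gab m P : i != j -> inP P ->
  (d i)%:R = ea%:~R * q -> (d j)%:R = eb%:~R * q ->
  (forall f, f != 0 -> G A d j i f = ev q Gba f) ->
  (forall f, f != 0 -> G A d i j f = ev q Gab f) ->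
  eqSt (alt (stepA ea Gba) (stepB eb Gab) m st0) (alt (stepB eb Gab) (stepA ea Gba) m st0) ->
  alt (Tmap A d i) (Tmap A d j) m P = alt (Tmap A d j) (Tmap A d i) m P.
Proof.
move=> ij hP edi edj HGba HGab H.
have hA : forall Q s, Rel A d q P i j Q s -> Rel A d q P i j (Tmap A d i Q) (stepA ea Gba s).
  by move=> Q s; apply: stepA_ok.
have hB : forall Q s, Rel A d q P i j Q s -> Rel A d q P i j (Tmap A d j Q) (stepB eb Gab s).
  by move=> Q s; apply: stepB_ok.
have R1 := alt_ok m hA hB (Rel0 A d q P ij).
have R2 := alt_ok m hB hA (Rel0 A d q P ij).
exact: (Rel_eq (hP i) (hP j) R1 R2 H).
Qed.

End Main.

End Part5.
Import Part5.

Module Part6.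

Opaque shift Defs.half.

Lemma ev3 (q : C) a b c f : ev q [:: (a, 1%:Z); (b, 1%:Z); (c, 1%:Z)] f =
  shift (a%:~R * q) f * shift (b%:~R * q) f * shift (c%:~R * q) f.
Proof. rewrite !ev_cons ev_nil mulr1 mulrA; reflexivity. Qed.

Lemma shift3_eq a b c a' b' c' f : a' = a -> b' = b -> c' = c ->
  shift a f * shift b f * shift c f = shift a' f * shift b' f * shift c' f.
Proof. by move=> -> -> ->. Qed.

Section Cases.
Variables (l : nat) (A : 'M[int]_l) (d : 'I_l -> nat).

Lemma G_m1 k j f : A k j = -1 -> G A d k j f = shift (Defs.half (d k)%:R) f.
Proof. by move=> h; rewrite /G h. Qed.
Lemma G_m2 k j f : A k j = -2 -> G A d k j f = shift 1 f * f.
Proof. by move=> h; rewrite /G h. Qed.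
Lemma G_m3 k j f : A k j = -3 -> G A d k j f =
  shift (Defs.half 3%:R) f * shift (Defs.half 1) f * shift (- Defs.half 1) f.
Proof. by move=> h; rewrite /G h. Qed.

Lemma intr1C : (1%:Z)%:~R = 1 :> C. Proof. by []. Qed.
Lemma intrm1C : (-1 : int)%:~R = -1 :> C. Proof. by []. Qed.

Lemma braid_A2 i j P : i != j -> inP P -> A i j = -1 -> A j i = -1 -> d i = d j ->
  alt (Tmap A d i) (Tmap A d j) 3 P = alt (Tmap A d j) (Tmap A d i) 3 P.
Proof.
move=> ij hP hij hji dij.
apply: (@machine l A d i j (Defs.half (d i)%:R) 2 2 [:: (1%:Z, 1%:Z)] [:: (1%:Z, 1%:Z)] 3 P ij hP).
- by rewrite two_half.
- by rewrite -dij two_half.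
- by move=> f _; rewrite (G_m1 _ hji) ev_single intr1C mul1r dij.
- by move=> f _; rewrite (G_m1 _ hij) ev_single intr1C mul1r.
- by vm_compute.
Qed.

Lemma braid_B2 i j P : i != j -> inP P -> A i j = -2 -> A j i = -1 -> d i = 1%N -> d j = 2%N ->
  alt (Tmap A d i) (Tmap A d j) 4 P = alt (Tmap A d j) (Tmap A d i) 4 P.
Proof.
move=> ij hP hij hji di dj.
apply: (@machine l A d i j (Defs.half 1) 2 4 [:: (2%:Z, 1%:Z)] [:: (2%:Z, 1%:Z); (0%:Z, 1%:Z)] 4 P ij hP).
- by rewrite two_half di.
- have -> : (4%:Z)%:~R = (2%:Z)%:~R * (2%:Z)%:~R :> C by rewrite -intrM.
  by rewrite -mulrA two_half mulr1 dj.
- by move=> f _; rewrite (G_m1 _ hji) ev_single dj half_mul.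
- move=> f _; rewrite (G_m2 _ hij) ev_cons ev_single /= expr1z two_half mulr0z mul0r shift_0.
  reflexivity.
- by vm_compute.
Qed.

Lemma braid_G2 i j P : i != j -> inP P -> A i j = -3 -> A j i = -1 -> d i = 1%N -> d j = 3%N ->
  alt (Tmap A d i) (Tmap A d j) 6 P = alt (Tmap A d j) (Tmap A d i) 6 P.
Proof.
move=> ij hP hij hji di dj.
apply: (@machine l A d i j (Defs.half 1) 2 6 [:: (3%:Z, 1%:Z)]
   [:: (3%:Z, 1%:Z); (1%:Z, 1%:Z); (-1, 1%:Z)] 6 P ij hP).
- by rewrite two_half di.
- have -> : (6%:Z)%:~R = (2%:Z)%:~R * (3%:Z)%:~R :> C by rewrite -intrM.
  by rewrite -mulrA half_mul two_half dj.
- by move=> f _; rewrite (G_m1 _ hji) ev_single dj half_mul.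
- move=> f _; rewrite (G_m3 _ hij) ev3.
  apply: shift3_eq.
  + by rewrite half_mul.
  + by rewrite intr1C mul1r.
  + by rewrite intrm1C mulN1r.
- by vm_compute.
Qed.

End Cases.

End Part6.
Import Part6.

Opaque shift Defs.half.



Theorem mainTheorem1 (l : nat) (A : 'M[int]_l) (d : 'I_l -> nat) :
  simple_cartan A d ->
  (forall j : 'I_l,
     (forall P, inP P -> inP (Tmap A d j P)) /\
     exists U : tuple_rf l -> tuple_rf l,
       (forall P, inP P -> inP (U P)) /\
       (forall P, inP P -> U (Tmap A d j P) = P) /\
       (forall P, inP P -> Tmap A d j (U P) = P)) /\
  (forall i j : 'I_l, i != j -> forall P, inP P ->
     alt (Tmap A d i) (Tmap A d j) (braid_m A i j) P =
     alt (Tmap A d j) (Tmap A d i) (braid_m A i j) P).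
Proof.
case=> _ [[hdiag [hoff hzero]] [hind [hsym [[hpos hgcd] hpd]]]].
split.
  move=> j; split; first by move=> P; exact: T_inP.
  exists (Umap A d j); split; first by move=> P; exact: U_inP.
  by split => P hP; [exact: U_T | exact: T_U].
move=> i j ij P hP.
have key : forall a b, a != b -> A b a = -1 -> A a b != 0 ->
    alt (Tmap A d a) (Tmap A d b) (braid_m A a b) P =
    alt (Tmap A d b) (Tmap A d a) (braid_m A a b) P.
  move=> a b ab hba hab0.
  have p3 := prod_le3 hdiag hsym hpd ab.
  have hab1 := hoff a b ab.
  have hs := hsym a b; rewrite hba in hs.
  have : (A a b = -1) \/ (A a b = -2) \/ (A a b = -3).
    move: p3 hab1 hab0; rewrite hba; lia.
  case=> [hab|[hab|hab]].
  - have -> : braid_m A a b = 3%N by rewrite /braid_m hab hba.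
    apply: braid_A2 => //; move: hs; rewrite hab; lia.
  - have da : d a = 1%N.
      apply: (short_is_one hdiag hoff hsym hpd hzero hpos hgcd hind _ hba).
      by rewrite hab hba.
    have -> : braid_m A a b = 4%N by rewrite /braid_m hab hba.
    apply: braid_B2 => //; move: hs; rewrite hab da; lia.
  - have da : d a = 1%N.
      apply: (short_is_one hdiag hoff hsym hpd hzero hpos hgcd hind _ hba).
      by rewrite hab hba.
    have -> : braid_m A a b = 6%N by rewrite /braid_m hab hba.
    apply: braid_G2 => //; move: hs; rewrite hab da; lia.
have [h0|hn0] := eqVneq (A i j) 0.
  have h0' : A j i = 0 by apply/hzero.
  have -> : braid_m A i j = 2%N by rewrite /braid_m h0 h0'.
  exact: (braid_zero d P ij h0 h0').
have hn0' : A j i != 0 by apply/eqP => /hzero; apply/eqP.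
have [hji|hji] := eqVneq (A j i) (-1); first exact: key.
have hij : A i j = -1.
  have p3 := prod_le3 hdiag hsym hpd ij.
  have h1 := hoff i j ij.
  have ji : j != i by rewrite eq_sym.
  have h2 := hoff j i ji.
  move: p3 h1 h2 hn0 hn0' hji; lia.
have ji : j != i by rewrite eq_sym.
have := key j i ji hij hn0'.
have -> : braid_m A j i = braid_m A i j by rewrite /braid_m mulrC.
move=> H; exact: (esym H).
Qed.
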